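(* There is a constant $c>0$ such that for every $n \ge 2$, every path on $n$ vertices has an $x$-monotone straight-through drawing on any set of at least $c\, n \log n$ points in the plane in general orthogonal position.
   Context: A point set is in general orthogonal position if no two of its points share the same $x$-coordinate or the same $y$-coordinate. Points are unlabelled: a drawing of a graph on a point set $P$ places the vertices at distinct points of $P$ (any vertex may go to any point; not all points need to be used). A planar L-shaped drawing is such a placement in which every edge is drawn as an orthogonal polygonal path consisting of one horizontal and one vertical segment (one bend) between its endpoints, and no two edges intersect except at a common endpoint. A straight-through drawing of a path is a planar L-shaped drawing in which, at every vertex, its (at most two) incident edges are aligned, i.e., both leave the vertex horizontally or both leave it vertically. The drawing is $x$-monotone if the $x$-coordinates of the vertices are non-decreasing in the order along the path. *)

(* Defs.v *)
From Stdlib Require Export Reals List.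
Export ListNotations.
Open Scope R_scope.

Definition point := (R * R)%type.

Definition general_orthogonal_position (P : list point) : Prop :=
  forall p q, In p P -> In q P -> p <> q -> fst p <> fst q /\ snd p <> snd q.

Definition on_segment (a b z : point) : Prop :=
  exists t, 0 <= t <= 1 /\
    z = (fst a + t * (fst b - fst a), snd a + t * (snd b - snd a)).

(* The path on n vertices is 0 - 1 - ... - (n-1), with edges {i, i+1}
   for i + 1 < n.  A drawing places vertex i at point pos i and draws edge
   {i, i+1} as the polyline pos i -- bend i -- pos (i+1). *)

Definition L_shaped_edge (pos bend : nat -> point) (i : nat) : Prop :=
  bend i = (fst (pos (S i)), snd (pos i)) \/
  bend i = (fst (pos i), snd (pos (S i))).

Definition on_edge (pos bend : nat -> point) (i : nat) (z : point) : Prop :=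
  on_segment (pos i) (bend i) z \/ on_segment (bend i) (pos (S i)) z.

Definition planar_L_drawing (n : nat) (P : list point) (pos bend : nat -> point) : Prop :=
  (forall i, (i < n)%nat -> In (pos i) P) /\
  (forall i j, (i < n)%nat -> (j < n)%nat -> pos i = pos j -> i = j) /\
  (forall i, (S i < n)%nat -> L_shaped_edge pos bend i) /\
  (forall i j z, (i < j)%nat -> (S j < n)%nat ->
     on_edge pos bend i z -> on_edge pos bend j z ->
     (z = pos i \/ z = pos (S i)) /\ (z = pos j \/ z = pos (S j))).

Definition leaves_horizontally (v b : point) : Prop := snd b = snd v.
Definition leaves_vertically (v b : point) : Prop := fst b = fst v.

(* At every inner vertex i (0 < i < n-1) the two incident edges
   {i-1,i} (segment bend (i-1) -- pos i) and {i,i+1} (segment pos i -- bend i)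
   are aligned. *)
Definition straight_through (n : nat) (pos bend : nat -> point) : Prop :=
  forall i, (0 < i)%nat -> (S i < n)%nat ->
    (leaves_horizontally (pos i) (bend (pred i)) /\ leaves_horizontally (pos i) (bend i)) \/
    (leaves_vertically (pos i) (bend (pred i)) /\ leaves_vertically (pos i) (bend i)).

Definition x_monotone (n : nat) (pos : nat -> point) : Prop :=
  forall i, (S i < n)%nat -> fst (pos i) <= fst (pos (S i)).

Definition xmono_straight_through_drawing (n : nat) (P : list point) : Prop :=
  exists pos bend : nat -> point,
    planar_L_drawing n P pos bend /\ straight_through n pos bend /\ x_monotone n pos.

(* Main.v *)
Require Import Defs.
From Stdlib Require Import Reals List.
From Stdlib Require Import Lra Lia Classical ClassicalEpsilon Arith.
Open Scope R_scope.

Definition betw (a b c : R) := (a < b < c) \/ (c < b < a).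

Definition chainP (P : list point) (m : nat) (f : nat -> point) : Prop :=
  (forall i, (i < m)%nat -> In (f i) P) /\
  (forall i, (S i < m)%nat -> fst (f i) < fst (f (S i))) /\
  (forall i, (S (S i) < m)%nat -> Nat.even i = true ->
     betw (snd (f i)) (snd (f (S i))) (snd (f (S (S i))))).

Definition Ak (P : list point) (k : nat) (u : point) : Prop :=
  exists f, f 0%nat = u /\ chainP P (2*k+1) f.

Definition bP (A : Prop) : bool := if excluded_middle_informative A then true else false.

Lemma bP_true A : bP A = true <-> A.
Proof. unfold bP; destruct (excluded_middle_informative A); split; auto; try discriminate; tauto. Qed.

Lemma bP_eq A B : bP A = bP B -> (A <-> B).
Proof.
  unfold bP; destruct (excluded_middle_informative A), (excluded_middle_informative B);
  intros; try discriminate; tauto.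
Qed.

Lemma edge_step P k u w v : In u P -> In w P -> Ak P k v -> fst u < fst w < fst v ->
  betw (snd u) (snd w) (snd v) -> Ak P (S k) u.
Proof.
  intros Hu Hw [f [Hf0 [H1 [H2 H3]]]] Hx Hy.
  exists (fun i => match i with 0 => u | 1 => w | S (S j) => f j end).
  split; [reflexivity|]. split; [|split].
  - intros [|[|j]] Hi; auto. apply H1; lia.
  - intros [|[|j]] Hi; simpl.
    + lra.
    + rewrite Hf0; lra.
    + apply H2; lia.
  - intros [|[|j]] Hi He; simpl.
    + rewrite Hf0; auto.
    + discriminate.
    + apply H3; [lia| exact He].
Qed.

Lemma es5 (L : list point) : NoDup L ->
  (forall p q, In p L -> In q L -> p <> q -> fst p <> fst q /\ snd p <> snd q) ->
  (forall u w v, In u L -> In w L -> In v L -> fst u < fst w < fst v ->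
      betw (snd u) (snd w) (snd v) -> False) ->
  (length L <= 4)%nat.
Proof.
  intros Hnd Hg Hno.
  set (inc := fun p => bP (exists q, In q L /\ fst q < fst p /\ snd q < snd p)).
  set (dec := fun p => bP (exists q, In q L /\ fst q < fst p /\ snd p < snd q)).
  set (g := fun p => (inc p, dec p)).
  assert (Hinj : NoDup (map g L)).
  { apply NoDup_map_NoDup_ForallPairs; [|exact Hnd].
    intros p q Hp Hq Heq. destruct (classic (p = q)) as [|Hne]; auto. exfalso.
    destruct (Hg p q Hp Hq Hne) as [Hx Hy].
    unfold g, inc, dec in Heq. injection Heq as E1 E2.
    apply bP_eq in E1. apply bP_eq in E2.
    destruct (Rtotal_order (fst p) (fst q)) as [Hxl|[Hxe|Hxl]]; [|contradiction|];
    destruct (Rtotal_order (snd p) (snd q)) as [Hyl|[Hye|Hyl]]; try contradiction.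
    - destruct (proj2 E1 (ex_intro _ p (conj Hp (conj Hxl Hyl)))) as [r [Hr [Hr1 Hr2]]].
      apply (Hno r p q); auto. unfold betw; lra.
    - destruct (proj2 E2 (ex_intro _ p (conj Hp (conj Hxl Hyl)))) as [r [Hr [Hr1 Hr2]]].
      apply (Hno r p q); auto. unfold betw; lra.
    - destruct (proj1 E2 (ex_intro _ q (conj Hq (conj Hxl Hyl)))) as [r [Hr [Hr1 Hr2]]].
      apply (Hno r q p); auto. unfold betw; lra.
    - destruct (proj1 E1 (ex_intro _ q (conj Hq (conj Hxl Hyl)))) as [r [Hr [Hr1 Hr2]]].
      apply (Hno r q p); auto. unfold betw; lra. }
  replace (length L) with (length (map g L)) by apply length_map.
  apply (NoDup_incl_length Hinj (l' := [(true,true);(true,false);(false,true);(false,false)])).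
  intros [a b] _; destruct a, b; simpl; tauto.
Qed.

Lemma filter_split {A} (p q r : A -> bool) l :
  (forall x, p x = true -> q x = true \/ r x = true) ->
  (length (filter p l) <= length (filter q l) + length (filter r l))%nat.
Proof.
  intros H; induction l as [|a l IH]; simpl; [lia|].
  destruct (p a) eqn:Ep, (q a) eqn:Eq, (r a) eqn:Er; simpl; try lia.
  exfalso; destruct (H a Ep); congruence.
Qed.

Lemma filter_none {A} (p : A -> bool) l :
  (forall x, In x l -> p x = false) -> length (filter p l) = 0%nat.
Proof.
  induction l as [|a l IH]; intros H; simpl; auto.
  rewrite (H a (or_introl eq_refl)). apply IH; intros; apply H; simpl; auto.
Qed.

Lemma count P k : NoDup P -> general_orthogonal_position P ->
  (length (filter (fun u => negb (bP (Ak P k u))) P) <= 4*k)%nat.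
Proof.
  intros Hnd Hg. induction k as [|k IH].
  - rewrite filter_none; [lia|]. intros x Hx.
    assert (Ak P 0 x).
    { exists (fun _ => x). split; auto. split; [|split].
      - intros; auto.
      - intros; lia.
      - intros; lia. }
    apply bP_true in H. rewrite H; reflexivity.
  - eapply Nat.le_trans.
    { apply (filter_split _ (fun u => negb (bP (Ak P k u)))
              (fun u => andb (bP (Ak P k u)) (negb (bP (Ak P (S k) u))))).
      intros x Hx. destruct (bP (Ak P k x)); simpl; auto. }
    assert (length (filter (fun u => andb (bP (Ak P k u)) (negb (bP (Ak P (S k) u)))) P) <= 4)%nat.
    { apply es5.
      - apply NoDup_filter; auto.
      - intros p q Hp Hq. apply filter_In in Hp. apply filter_In in Hq.
        apply Hg; tauto.
      - intros u w v Hu Hw Hv Hx Hy.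
        apply filter_In in Hu. apply filter_In in Hw. apply filter_In in Hv.
        destruct Hu as [Hu Hu2]. destruct Hw as [Hw _]. destruct Hv as [_ Hv2].
        apply andb_prop in Hu2. apply andb_prop in Hv2.
        destruct Hu2 as [_ Hu2]. destruct Hv2 as [Hv2 _].
        apply (proj1 (bP_true _)) in Hv2.
        assert (H := edge_step P k u w v Hu Hw Hv2 Hx Hy).
        apply (proj2 (bP_true _)) in H. rewrite H in Hu2. discriminate. }
    lia.
Qed.

Lemma seg_fst a b z : on_segment a b z ->
  (fst a <= fst z <= fst b) \/ (fst b <= fst z <= fst a).
Proof.
  intros [t [Ht ->]]; simpl. destruct (Rle_dec (fst a) (fst b)); [left|right]; split; nra.
Qed.
Lemma seg_snd a b z : on_segment a b z ->
  (snd a <= snd z <= snd b) \/ (snd b <= snd z <= snd a).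
Proof.
  intros [t [Ht ->]]; simpl. destruct (Rle_dec (snd a) (snd b)); [left|right]; split; nra.
Qed.
Lemma seg_fst_eq a b z : on_segment a b z -> fst a = fst b -> fst z = fst a.
Proof. intros [t [Ht ->]] E; simpl; rewrite E; ring. Qed.
Lemma seg_snd_eq a b z : on_segment a b z -> snd a = snd b -> snd z = snd a.
Proof. intros [t [Ht ->]] E; simpl; rewrite E; ring. Qed.

Lemma pt_eq (z b : point) : fst z = fst b -> snd z = snd b -> z = b.
Proof. destruct z, b; simpl; intros; subst; auto. Qed.

Definition bendf (f : nat -> point) (i : nat) : point :=
  if Nat.even i then (fst (f (S i)), snd (f i)) else (fst (f i), snd (f (S i))).

Lemma edge_x f i z : fst (f i) < fst (f (S i)) -> on_edge f (bendf f) i z ->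
  fst (f i) <= fst z <= fst (f (S i)).
Proof.
  unfold on_edge, bendf; destruct (Nat.even i); intros Hlt [H|H]; apply seg_fst in H;
  simpl in H; lra.
Qed.

Lemma even_S k : Nat.even (S k) = negb (Nat.even k).
Proof. rewrite Nat.even_succ, <- Nat.negb_even; reflexivity. Qed.

Lemma strict_x P m f : chainP P m f -> forall i j, (i < j)%nat -> (j < m)%nat ->
  fst (f i) < fst (f j).
Proof.
  intros [_ [H2 _]] i j Hij. induction Hij as [|j Hij IH]; intros Hm.
  - apply H2; lia.
  - apply Rlt_trans with (fst (f j)); [apply IH; lia| apply H2; lia].
Qed.

Lemma drawing P n m f : chainP P m f -> (n <= m)%nat -> xmono_straight_through_drawing n P.
Proof.
  intros Hc Hnm. pose proof Hc as [H1 [H2 H3]].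
  exists f, (bendf f). split; [|split].
  - split; [|split; [|split]].
    + intros i Hi; apply H1; lia.
    + intros i j Hi Hj E.
      destruct (Nat.lt_total i j) as [L|[L|L]]; auto; exfalso.
      * pose proof (strict_x P m f Hc i j L ltac:(lia)). rewrite E in H; lra.
      * pose proof (strict_x P m f Hc j i L ltac:(lia)). rewrite E in H; lra.
    + intros i Hi. unfold L_shaped_edge, bendf. destruct (Nat.even i); auto.
    + intros i j z Hij Hj Hzi Hzj.
      destruct (Nat.eq_dec j (S i)) as [->|Hne].
      * assert (Hx1 : fst (f i) < fst (f (S i))) by (apply H2; lia).
        assert (Hx2 : fst (f (S i)) < fst (f (S (S i)))) by (apply H2; lia).
        assert (fst z = fst (f (S i)) /\ snd z = snd (f (S i))) as [Ex Ey].
        { unfold on_edge, bendf in Hzi, Hzj. rewrite even_S in Hzj.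
          destruct (Nat.even i) eqn:Ev; simpl in Hzj.
          - assert (Hb := H3 i ltac:(lia) Ev). unfold betw in Hb.
            destruct Hzi as [Hs|Hs].
            + pose proof (seg_fst _ _ _ Hs) as A1. pose proof (seg_snd_eq _ _ _ Hs eq_refl) as A2.
              simpl in A1, A2.
              destruct Hzj as [Ht|Ht].
              * pose proof (seg_snd _ _ _ Ht) as B1. pose proof (seg_fst_eq _ _ _ Ht eq_refl) as B2.
                simpl in B1, B2. lra.
              * pose proof (seg_fst _ _ _ Ht) as B1. pose proof (seg_snd_eq _ _ _ Ht eq_refl) as B2.
                simpl in B1, B2. lra.
            + pose proof (seg_snd _ _ _ Hs) as A1. pose proof (seg_fst_eq _ _ _ Hs eq_refl) as A2.
              simpl in A1, A2.
              destruct Hzj as [Ht|Ht].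
              * pose proof (seg_snd _ _ _ Ht) as B1. pose proof (seg_fst_eq _ _ _ Ht eq_refl) as B2.
                simpl in B1, B2. lra.
              * pose proof (seg_fst _ _ _ Ht) as B1. pose proof (seg_snd_eq _ _ _ Ht eq_refl) as B2.
                simpl in B1, B2. lra.
          - destruct Hzi as [Hs|Hs].
            + pose proof (seg_fst_eq _ _ _ Hs eq_refl) as A2. simpl in A2.
              destruct Hzj as [Ht|Ht].
              * pose proof (seg_fst _ _ _ Ht) as B1. simpl in B1. lra.
              * pose proof (seg_fst_eq _ _ _ Ht eq_refl) as B2. simpl in B2. lra.
            + pose proof (seg_fst _ _ _ Hs) as A1. pose proof (seg_snd_eq _ _ _ Hs eq_refl) as A2.
              simpl in A1, A2.
              destruct Hzj as [Ht|Ht].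
              * pose proof (seg_fst _ _ _ Ht) as B1. simpl in B1. lra.
              * pose proof (seg_fst_eq _ _ _ Ht eq_refl) as B2. simpl in B2. lra. }
        pose proof (pt_eq _ _ Ex Ey). auto.
      * exfalso.
        assert (Hx1 : fst (f i) < fst (f (S i))) by (apply H2; lia).
        assert (Hx2 : fst (f j) < fst (f (S j))) by (apply H2; lia).
        pose proof (edge_x f i z Hx1 Hzi). pose proof (edge_x f j z Hx2 Hzj).
        pose proof (strict_x P m f Hc (S i) j ltac:(lia) ltac:(lia)). lra.
  - intros i Hi0 Hi. destruct i as [|i']; [lia|]. simpl.
    unfold leaves_horizontally, leaves_vertically, bendf. rewrite even_S.
    destruct (Nat.even i'); simpl; [right|left]; auto.
  - intros i Hi. apply Rlt_le, H2; lia.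
Qed.

Theorem theorem1 :
  exists c : R, 0 < c /\
    forall (n : nat) (P : list point),
      (2 <= n)%nat ->
      NoDup P ->
      general_orthogonal_position P ->
      c * INR n * ln (INR n) <= INR (length P) ->
      xmono_straight_through_drawing n P.
Proof.
  exists 10. split; [lra|]. intros n P Hn Hnd Hg Hlen.
  assert (Hn2 : 2 <= INR n) by (apply (le_INR 2); lia).
  assert (Hln : / 2 < ln (INR n)).
  { destruct (Rle_lt_or_eq_dec 2 (INR n) Hn2) as [L|E].
    - apply Rlt_trans with (ln 2); [apply ln_lt_2| apply ln_increasing; lra].
    - rewrite <- E; apply ln_lt_2. }
  assert (Hbig : (4 * n + 1 < length P)%nat).
  { apply INR_lt. rewrite plus_INR, mult_INR. simpl INR. nra. }
  pose proof (count P n Hnd Hg) as Hc.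
  pose proof (filter_length (fun u => bP (Ak P n u)) P) as Hfl.
  destruct (filter (fun u => bP (Ak P n u)) P) as [|u l] eqn:E.
  - simpl in Hfl. lia.
  - assert (Hu : In u (filter (fun u => bP (Ak P n u)) P)) by (rewrite E; simpl; auto).
    apply filter_In in Hu. destruct Hu as [_ Hu]. apply (proj1 (bP_true _)) in Hu.
    destruct Hu as [f [_ Hf]].
    apply (drawing P n (2*n+1) f Hf). lia.
Qed.
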